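(* Let $\mathbf{B}$ be a complex $5$-dimensional nilpotent binary Leibniz algebra. Then $\mathbf{B}$ is a Leibniz algebra, or $\mathbf{B}$ is isomorphic to one of the following algebras, each given on a basis $e_1,\dots,e_5$ (all products of basis elements not listed are zero; $\alpha\in\mathbb{C}$): \begin{itemize} \item $\mathbf{B}_{01}$: $e_1e_2=e_3,\ e_2e_1=-e_3,\ e_3e_4=e_5,\ e_4e_3=-e_5$; \item $\mathbf{B}_{02}$: $e_1e_2=e_3,\ e_2e_1=-e_3,\ e_3e_4=e_5,\ e_4e_3=-e_5,\ e_4e_4=e_5$; \item $\mathbf{B}_{03}$: $e_1e_2=e_3,\ e_2e_1=-e_3,\ e_3e_4=e_5,\ e_4e_1=e_5,\ e_4e_3=-e_5$; \item $\mathbf{B}_{04}$: $e_1e_2=e_3,\ e_2e_1=-e_3,\ e_3e_4=e_5,\ e_4e_1=e_5,\ e_4e_3=-e_5,\ e_4e_4=e_5$; \item $\mathbf{B}_{05}$: $e_1e_2=e_3+e_5,\ e_2e_1=-e_3,\ e_3e_4=e_5,\ e_4e_3=-e_5$; \item $\mathbf{B}_{06}$: $e_1e_2=e_3+e_5,\ e_2e_1=-e_3,\ e_3e_4=e_5,\ e_4e_1=e_5,\ e_4e_3=-e_5$; \item $\mathbf{B}_{07}$: $e_1e_2=e_3+e_5,\ e_2e_1=-e_3,\ e_3e_4=e_5,\ e_4e_3=-e_5,\ e_4e_4=e_5$; \item $\mathbf{B}_{08}$: $e_1e_2=e_3+e_5,\ e_2e_1=-e_3,\ e_3e_4=e_5,\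 e_4e_1=e_5,\ e_4e_3=-e_5,\ e_4e_4=e_5$; \item $\mathbf{B}_{09}^{\alpha}$: $e_1e_2=e_3+e_5,\ e_2e_1=-e_3,\ e_3e_4=e_5,\ e_4e_1=e_5,\ e_4e_2=e_5,\ e_4e_3=-e_5,\ e_4e_4=\alpha e_5$; \item $\mathbf{B}_{10}$: $e_1e_1=e_5,\ e_1e_2=e_3,\ e_2e_1=-e_3,\ e_3e_4=e_5,\ e_4e_3=-e_5$; \item $\mathbf{B}_{11}$: $e_1e_1=e_5,\ e_1e_2=e_3,\ e_2e_1=-e_3,\ e_3e_4=e_5,\ e_4e_3=-e_5,\ e_4e_4=e_5$; \item $\mathbf{B}_{12}^{\alpha}$: $e_1e_1=e_5,\ e_1e_2=e_3,\ e_2e_1=-e_3,\ e_3e_4=e_5,\ e_4e_1=e_5,\ e_4e_3=-e_5,\ e_4e_4=\alpha e_5$; \item $\mathbf{B}_{13}$: $e_1e_1=e_5,\ e_1e_2=e_3,\ e_2e_1=-e_3,\ e_3e_4=e_5,\ e_4e_2=e_5,\ e_4e_3=-e_5$; \item $\mathbf{B}_{14}$: $e_1e_1=e_5,\ e_1e_2=e_3,\ e_2e_1=-e_3,\ e_3e_4=e_5,\ e_4e_2=e_5,\ e_4e_3=-e_5,\ e_4e_4=e_5$. \end{itemize}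
   Context: All algebras are over $\mathbb{C}$ and not necessarily associative. An algebra is a Leibniz algebra if it satisfies $(xy)z=(xz)y+x(yz)$ for all $x,y,z$. An algebra is a binary Leibniz algebra if every subalgebra generated by two elements is a Leibniz algebra. An algebra $A$ is nilpotent if there is $n$ such that every product of $n$ elements of $A$, with any arrangement of brackets, is zero. *)

(* Defs.v *)
From HB Require Import structures.
From mathcomp Require Import all_boot all_order all_algebra.
From mathcomp Require Import complex.
From mathcomp Require Import Rstruct.
Set Implicit Arguments. Unset Strict Implicit. Unset Printing Implicit Defensive.
Import Order.TTheory GRing.Theory Num.Theory.
Local Open Scope ring_scope.

Definition CC : fieldType := (Rdefinitions.R)[i].

Section Algebras.
Variable V : vectType CC.
Variable mul : V -> V -> V.

Definition bilinear_prod : Prop :=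
  (forall x, linear (mul x)) /\ (forall y, linear (fun x => mul x y)).

Definition leibniz_on (P : V -> Prop) : Prop :=
  forall x y z, P x -> P y -> P z ->
    mul (mul x y) z = mul (mul x z) y + mul x (mul y z).

Definition is_leibniz : Prop := leibniz_on (fun _ => True).

Definition subalg_closed (U : {vspace V}) : Prop :=
  forall u v, u \in U -> v \in U -> mul u v \in U.

(* the subalgebra generated by a and b: intersection of all subalgebras
   containing a and b *)
Definition gen2 (a b : V) (x : V) : Prop :=
  forall U : {vspace V}, a \in U -> b \in U -> subalg_closed U -> x \in U.

Definition binary_leibniz : Prop := forall a b, leibniz_on (gen2 a b).

Inductive prod_n : nat -> V -> Prop :=
| prod_leaf x : prod_n 1 x
| prod_node m k x y : prod_n m x -> prod_n k y -> prod_n (m + k) (mul x y).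

Definition nilpotent_alg : Prop :=
  exists n, (0 < n)%N /\ forall x, prod_n n x -> x = 0.

End Algebras.

(* Algebras on CC^5 = 'rV[CC]_5 given by structure constants on the standard
   basis e_1..e_5 (1-based). *)
Definition e (k : nat) : 'rV[CC]_5 := delta_mx 0 (inord k.-1).

(* table of nonzero products: (i, j, e_i e_j); unlisted products are 0 *)
Definition sc (l : seq (nat * nat * 'rV[CC]_5)) (i j : 'I_5) : 'rV[CC]_5 :=
  \sum_(t <- l | (t.1.1 == i.+1) && (t.1.2 == j.+1)) t.2.

Definition mulsc (c : 'I_5 -> 'I_5 -> 'rV[CC]_5) (x y : 'rV[CC]_5) : 'rV[CC]_5 :=
  \sum_(i < 5) \sum_(j < 5) (x 0 i * y 0 j) *: c i j.

Definition iso_to (V : vectType CC) (mul : V -> V -> V)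
    (c : 'I_5 -> 'I_5 -> 'rV[CC]_5) : Prop :=
  exists f : V -> 'rV[CC]_5,
    [/\ linear f, bijective f & forall x y, f (mul x y) = mulsc c (f x) (f y)].

Definition B01 := sc [:: (1,2, e 3); (2,1, - e 3); (3,4, e 5); (4,3, - e 5)].
Definition B02 := sc [:: (1,2, e 3); (2,1, - e 3); (3,4, e 5); (4,3, - e 5);
                         (4,4, e 5)].
Definition B03 := sc [:: (1,2, e 3); (2,1, - e 3); (3,4, e 5); (4,1, e 5);
                         (4,3, - e 5)].
Definition B04 := sc [:: (1,2, e 3); (2,1, - e 3); (3,4, e 5); (4,1, e 5);
                         (4,3, - e 5); (4,4, e 5)].
Definition B05 := sc [:: (1,2, e 3 + e 5); (2,1, - e 3); (3,4, e 5);
                         (4,3, - e 5)].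
Definition B06 := sc [:: (1,2, e 3 + e 5); (2,1, - e 3); (3,4, e 5);
                         (4,1, e 5); (4,3, - e 5)].
Definition B07 := sc [:: (1,2, e 3 + e 5); (2,1, - e 3); (3,4, e 5);
                         (4,3, - e 5); (4,4, e 5)].
Definition B08 := sc [:: (1,2, e 3 + e 5); (2,1, - e 3); (3,4, e 5);
                         (4,1, e 5); (4,3, - e 5); (4,4, e 5)].
Definition B09 (alpha : CC) :=
  sc [:: (1,2, e 3 + e 5); (2,1, - e 3); (3,4, e 5); (4,1, e 5);
         (4,2, e 5); (4,3, - e 5); (4,4, alpha *: e 5)].
Definition B10 := sc [:: (1,1, e 5); (1,2, e 3); (2,1, - e 3); (3,4, e 5);
                         (4,3, - e 5)].
Definition B11 := sc [:: (1,1, e 5); (1,2, e 3); (2,1, - e 3); (3,4, e 5);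
                         (4,3, - e 5); (4,4, e 5)].
Definition B12 (alpha : CC) :=
  sc [:: (1,1, e 5); (1,2, e 3); (2,1, - e 3); (3,4, e 5); (4,1, e 5);
         (4,3, - e 5); (4,4, alpha *: e 5)].
Definition B13 := sc [:: (1,1, e 5); (1,2, e 3); (2,1, - e 3); (3,4, e 5);
                         (4,2, e 5); (4,3, - e 5)].
Definition B14 := sc [:: (1,1, e 5); (1,2, e 3); (2,1, - e 3); (3,4, e 5);
                         (4,2, e 5); (4,3, - e 5); (4,4, e 5)].

(* Main.v *)
Require Import Defs.
From HB Require Import structures.
From mathcomp Require Import all_boot all_order all_algebra.
From mathcomp Require Import complex.
From mathcomp Require Import Rstruct ring zify.
From Stdlib Require Import Classical.
Set Implicit Arguments. Unset Strict Implicit. Unset Printing Implicit Defensive.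
Import GRing.Theory Num.Theory.
Local Open Scope ring_scope.


Definition o0 : 'I_5 := @Ordinal 5 0 isT.
Definition o1 : 'I_5 := @Ordinal 5 1 isT.
Definition o2 : 'I_5 := @Ordinal 5 2 isT.
Definition o3 : 'I_5 := @Ordinal 5 3 isT.
Definition o4 : 'I_5 := @Ordinal 5 4 isT.

Lemma eE k (j : 'I_5) : (k.-1 < 5)%N -> e k 0 j = ((k.-1 == j :> nat))%:R.
Proof. move=> hk; rewrite /e mxE /= -val_eqE /= inordK // eq_sym. done. Qed.

Lemma sum5 (T : nmodType) (F : 'I_5 -> T) :
  \sum_(i < 5) F i = F o0 + F o1 + F o2 + F o3 + F o4.
Proof.
rewrite !big_ord_recl big_ord0 addr0 !addrA.
by congr (_ + _ + _ + _ + _); congr F; apply: val_inj.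
Qed.

Definition isgen (i : 'I_5) : bool := (i != 2 :> nat) && (i != 4 :> nat).

Definition E (k : nat) : 'rV[CC]_5 := \row_j ((k == j :> nat)%:R).

Definition Tform (cc dd : 'I_5 -> 'I_5 -> CC) (pp qq : 'I_5 -> CC) 
  (i j : 'I_5) : 'rV[CC]_5 :=
  if isgen i && isgen j then cc i j *: E 2 + dd i j *: E 4
  else if isgen i && (j == 2 :> nat) then pp i *: E 4
  else if (i == 2 :> nat) && isgen j then qq j *: E 4 else 0.

Definition Cf (cc : 'I_5 -> 'I_5 -> CC) (x y : 'rV[CC]_5) : CC :=
  x 0 o0 * y 0 o0 * cc o0 o0 + x 0 o0 * y 0 o1 * cc o0 o1 + x 0 o0 * y 0 o3 * cc o0 o3
+ x 0 o1 * y 0 o0 * cc o1 o0 + x 0 o1 * y 0 o1 * cc o1 o1 + x 0 o1 * y 0 o3 * cc o1 o3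
+ x 0 o3 * y 0 o0 * cc o3 o0 + x 0 o3 * y 0 o1 * cc o3 o1 + x 0 o3 * y 0 o3 * cc o3 o3.

Definition pf (pp : 'I_5 -> CC) (x : 'rV[CC]_5) : CC :=
  x 0 o0 * pp o0 + x 0 o1 * pp o1 + x 0 o3 * pp o3.

Lemma e_row k : (k.-1 < 5)%N -> e k = \row_j ((k.-1 == j :> nat)%:R).
Proof. by move=> hk; apply/rowP => j; rewrite eE // mxE. Qed.
Lemma Tform_entry cc dd pp qq i j k :
  Tform cc dd pp qq i j 0 k =
  if isgen i && isgen j then
     (if k == o2 then cc i j else if k == o4 then dd i j else 0)
  else if isgen i && (j == 2 :> nat) then (if k == o4 then pp i else 0)
  else if (i == 2 :> nat) && isgen j then (if k == o4 then qq j else 0) else 0.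
Proof.
rewrite /Tform.
case: ifP => _; first by rewrite !mxE; case: k => [[|[|[|[|[|?]]]]] ?] //=; rewrite ?mulr0 ?mulr1 ?addr0 ?add0r.
case: ifP => _; first by rewrite !mxE; case: k => [[|[|[|[|[|?]]]]] ?] //=; rewrite ?mulr0 ?mulr1.
case: ifP => _; first by rewrite !mxE; case: k => [[|[|[|[|[|?]]]]] ?] //=; rewrite ?mulr0 ?mulr1.
by rewrite mxE.
Qed.
Lemma mulsc_entry c x y k :
  mulsc c x y 0 k = \sum_i \sum_j x 0 i * y 0 j * c i j 0 k.
Proof.
rewrite /mulsc summxE; apply: eq_bigr => i _; rewrite summxE.
by apply: eq_bigr => j _; rewrite mxE.
Qed.
Definition tfe (cc dd : 'I_5 -> 'I_5 -> CC) (pp qq : 'I_5 -> CC) (i j k : 'I_5) : CC :=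
  if isgen i && isgen j then
     (if k == o2 then cc i j else if k == o4 then dd i j else 0)
  else if isgen i && (j == 2 :> nat) then (if k == o4 then pp i else 0)
  else if (i == 2 :> nat) && isgen j then (if k == o4 then qq j else 0) else 0.
Lemma mulsc_Tform_entry cc dd pp qq x y k :
  mulsc (Tform cc dd pp qq) x y 0 k = \sum_i \sum_j x 0 i * y 0 j * tfe cc dd pp qq i j k.
Proof.
rewrite mulsc_entry; apply: eq_bigr => i _; apply: eq_bigr => j _.
by rewrite Tform_entry.
Qed.
Lemma mulsc_Tform cc dd pp qq x y :
  mulsc (Tform cc dd pp qq) x y =
  Cf cc x y *: E 2 + (Cf dd x y + pf pp x * y 0 o2 + x 0 o2 * pf qq y) *: E 4.
Proof.
apply/rowP => k; rewrite mulsc_Tform_entry !sum5 !mxE.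
by case: k => [[|[|[|[|[|?]]]]] ?]; rewrite /tfe /isgen /=; rewrite /Cf /pf; ring.
Qed.

Definition mkG (r : 'I_5 -> 'rV[CC]_5) : 'M[CC]_5 := \matrix_(i, j) r i 0 j.
Lemma row_mkG r i : row i (mkG r) = r i.
Proof. by apply/rowP => j; rewrite !mxE. Qed.
Lemma Tform_mkG cc dd pp qq i j r l :
  (Tform cc dd pp qq i j *m mkG r) 0 l = \sum_k tfe cc dd pp qq i j k * r k 0 l.
Proof. by rewrite mxE; apply: eq_bigr => k _; rewrite Tform_entry mxE. Qed.

Definition tiso (c c' : 'I_5 -> 'I_5 -> 'rV[CC]_5) : Prop :=
  exists G : 'M[CC]_5, (forall r : 'rV[CC]_5, r *m G = 0 -> r = 0) /\
    forall i j, mulsc c (row i G) (row j G) = c' i j *m G.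

Definition rows5 (r0 r1 r2 r3 r4 : 'rV[CC]_5) (i : 'I_5) : 'rV[CC]_5 :=
  match nat_of_ord i with 0 => r0 | 1 => r1 | 2 => r2 | 3 => r3 | _ => r4 end.

Lemma mkG_entry r (x : 'rV[CC]_5) l : (x *m mkG r) 0 l = \sum_k x 0 k * r k 0 l.
Proof. by rewrite mxE; apply: eq_bigr => k _; rewrite mxE. Qed.

Definition ncc (i j : 'I_5) : CC :=
  match nat_of_ord i, nat_of_ord j with 0, 1 => 1 | 1, 0 => -1 | _, _ => 0 end.
Definition npp (i : 'I_5) : CC := if nat_of_ord i == 3 then -1 else 0.
Definition nqq (i : 'I_5) : CC := if nat_of_ord i == 3 then 1 else 0.
Definition ndd (m11 m12 m22 v1 v2 s : CC) (i j : 'I_5) : CC :=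
  match nat_of_ord i, nat_of_ord j with
  | 0, 0 => m11 | 0, 1 => m12 | 1, 1 => m22 | 3, 0 => v1 | 3, 1 => v2 | 3, 3 => s
  | _, _ => 0 end.
Definition Nform m11 m12 m22 v1 v2 s := Tform ncc (ndd m11 m12 m22 v1 v2 s) npp nqq.
Definition mkrow (x0 x1 x2 x3 x4 : CC) : 'rV[CC]_5 :=
  \row_l (match nat_of_ord l with 0 => x0 | 1 => x1 | 2 => x2 | 3 => x3 | _ => x4 end).
Lemma mkrow0 x0 x1 x2 x3 x4 : mkrow x0 x1 x2 x3 x4 0 o0 = x0. Proof. by rewrite mxE. Qed.
Lemma mkrow1 x0 x1 x2 x3 x4 : mkrow x0 x1 x2 x3 x4 0 o1 = x1. Proof. by rewrite mxE. Qed.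
Lemma mkrow2 x0 x1 x2 x3 x4 : mkrow x0 x1 x2 x3 x4 0 o2 = x2. Proof. by rewrite mxE. Qed.
Lemma mkrow3 x0 x1 x2 x3 x4 : mkrow x0 x1 x2 x3 x4 0 o3 = x3. Proof. by rewrite mxE. Qed.
Lemma mkrow4 x0 x1 x2 x3 x4 : mkrow x0 x1 x2 x3 x4 0 o4 = x4. Proof. by rewrite mxE. Qed.
Definition mkrowE := (mkrow0, mkrow1, mkrow2, mkrow3, mkrow4).
Definition alphaT (cc : 'I_5 -> 'I_5 -> CC) (i j : 'I_5) : CC :=
  if isgen i && isgen j then cc i j else 0.
Definition betaT cc dd pp qq (i j : 'I_5) : CC := tfe cc dd pp qq i j o4.

Lemma Tform_split cc dd pp qq i j :
  Tform cc dd pp qq i j = alphaT cc i j *: E 2 + betaT cc dd pp qq i j *: E 4.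
Proof.
apply/rowP => k; rewrite Tform_entry !mxE /alphaT /betaT /tfe.
case: ifP => _; first by case: k => [[|[|[|[|[|?]]]]] ?] //=; rewrite ?mulr0 ?mulr1 ?addr0 ?add0r.
by case: ifP => _; [|case: ifP => _]; case: k => [[|[|[|[|[|?]]]]] ?] //=; rewrite ?mulr0 ?mulr1 ?addr0 ?add0r.
Qed.

Lemma E_mulmx k (G : 'M[CC]_5) (hk : (k < 5)%N) : E k *m G = row (Ordinal hk) G.
Proof.
apply/rowP => l; rewrite !mxE sum5 !mxE.
by case: k hk => [|[|[|[|[|?]]]]] hk //=; rewrite ?mul1r ?mul0r ?addr0 ?add0r; congr (G _ _); apply: val_inj.
Qed.

Lemma tiso_Tform cc dd pp qq cc' dd' pp' qq' (r : 'I_5 -> 'rV[CC]_5) mu nu la :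
  (forall x : 'rV[CC]_5, x *m mkG r = 0 -> x = 0) ->
  r o2 = mu *: E 2 + nu *: E 4 -> r o4 = la *: E 4 ->
  (forall i j, Cf cc (r i) (r j) = alphaT cc' i j * mu) ->
  (forall i j, Cf dd (r i) (r j) + pf pp (r i) * r j 0 o2 + r i 0 o2 * pf qq (r j)
       = alphaT cc' i j * nu + betaT cc' dd' pp' qq' i j * la) ->
  tiso (Tform cc dd pp qq) (Tform cc' dd' pp' qq').
Proof.
move=> hinj h2 h4 hC hK; exists (mkG r); split => // i j.
rewrite !row_mkG mulsc_Tform Tform_split mulmxDl -!scalemxAl.
rewrite (E_mulmx _ (isT : (2 < 5)%N)) (E_mulmx _ (isT : (4 < 5)%N)) !row_mkG.
have -> : Ordinal (isT : (2 < 5)%N) = o2 by apply: val_inj.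
have -> : Ordinal (isT : (4 < 5)%N) = o4 by apply: val_inj.
by rewrite h2 h4 hC hK !scalerDr !scalerA scalerDl addrA.
Qed.
Lemma Cf_mkrow cc x0 x1 x2 x3 x4 y0 y1 y2 y3 y4 :
  Cf cc (mkrow x0 x1 x2 x3 x4) (mkrow y0 y1 y2 y3 y4) =
  x0 * y0 * cc o0 o0 + x0 * y1 * cc o0 o1 + x0 * y3 * cc o0 o3
+ x1 * y0 * cc o1 o0 + x1 * y1 * cc o1 o1 + x1 * y3 * cc o1 o3
+ x3 * y0 * cc o3 o0 + x3 * y1 * cc o3 o1 + x3 * y3 * cc o3 o3.
Proof. by rewrite /Cf !mkrowE. Qed.
Lemma pf_mkrow pp x0 x1 x2 x3 x4 :
  pf pp (mkrow x0 x1 x2 x3 x4) = x0 * pp o0 + x1 * pp o1 + x3 * pp o3.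
Proof. by rewrite /pf !mkrowE. Qed.

Lemma rV0 (x : 'rV[CC]_5) :
  x 0 o0 = 0 -> x 0 o1 = 0 -> x 0 o2 = 0 -> x 0 o3 = 0 -> x 0 o4 = 0 -> x = 0.
Proof.
move=> h0 h1 h2 h3 h4; apply/rowP => l; rewrite mxE.
case: l => [[|[|[|[|[|?]]]]] ?] //.
- by rewrite -h0; congr (x _ _); apply: val_inj.
- by rewrite -h1; congr (x _ _); apply: val_inj.
- by rewrite -h2; congr (x _ _); apply: val_inj.
- by rewrite -h3; congr (x _ _); apply: val_inj.
- by rewrite -h4; congr (x _ _); apply: val_inj.
Qed.

Lemma mkG_rows_eq (x : 'rV[CC]_5) r0 r1 r2 r3 r4 l :
  x *m mkG (rows5 r0 r1 r2 r3 r4) = 0 ->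
  x 0 o0 * r0 0 l + x 0 o1 * r1 0 l + x 0 o2 * r2 0 l + x 0 o3 * r3 0 l + x 0 o4 * r4 0 l = 0.
Proof.
move=> h; have := congr1 (fun M : 'rV_5 => M 0 l) h.
by rewrite mkG_entry sum5 mxE.
Qed.

Lemma mulf0 (x y : CC) : y != 0 -> x * y = 0 -> x = 0.
Proof. by move=> hy /eqP; rewrite mulf_eq0 (negbTE hy) orbF => /eqP. Qed.

Lemma tiso_move m11 m12 m22 v1 v2 s a b c d t :
  a * d - b * c != 0 -> t != 0 ->
  let D := a * d - b * c in
  tiso (Nform m11 m12 m22 v1 v2 s)
       (Nform ((a^+2 * m11 + a * b * m12 + b^+2 * m22) / (D * t))
              ((2 * a * c * m11 + (a * d + b * c) * m12 + 2 * b * d * m22) / (D * t))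
              ((c^+2 * m11 + c * d * m12 + d^+2 * m22) / (D * t))
              ((a * v1 + b * v2) / D) ((c * v1 + d * v2) / D) (t * s / D)).
Proof.
move=> hD ht D.
have hDt : D * t != 0 by rewrite mulf_neq0.
apply: (@tiso_Tform _ _ _ _ _ _ _ _ (rows5 (mkrow a b 0 0 0) (mkrow c d 0 0 0)
   (mkrow 0 0 D 0 (- (a * c * m11 + b * c * m12 + b * d * m22))) (mkrow 0 0 0 t 0) (mkrow 0 0 0 0 (D * t)))
   D (- (a * c * m11 + b * c * m12 + b * d * m22)) (D * t)).
- move=> x hx.
  have h0 := mkG_rows_eq o0 hx; have h1 := mkG_rows_eq o1 hx; have h2 := mkG_rows_eq o2 hx;
  have h3 := mkG_rows_eq o3 hx; have h4 := mkG_rows_eq o4 hx.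
  rewrite !mkrowE ?(mulr0, mul0r, addr0, add0r, mulr1) in h0 h1 h2 h3 h4.
  have e2 : x 0 o2 = 0 by apply: (mulf0 hD).
  have e3 : x 0 o3 = 0 by apply: (mulf0 ht).
  have e4 : x 0 o4 = 0 by apply: (mulf0 hDt); move: h4; rewrite e2 mul0r add0r.
  have e0 : x 0 o0 = 0.
    apply: (mulf0 hD); have -> : x 0 o0 * D = d * (x 0 o0 * a + x 0 o1 * c) - c * (x 0 o0 * b + x 0 o1 * d) by rewrite /D; ring.
    by rewrite h0 h1 !mulr0 subr0.
  have e1 : x 0 o1 = 0.
    apply: (mulf0 hD); have -> : x 0 o1 * D = a * (x 0 o0 * b + x 0 o1 * d) - b * (x 0 o0 * a + x 0 o1 * c) by rewrite /D; ring.
    by rewrite h0 h1 !mulr0 subr0.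
  exact: rV0.
- by apply/rowP => l; rewrite !mxE; case: l => [[|[|[|[|[|?]]]]] ?] //=; rewrite ?mulr0 ?mulr1 ?addr0 ?add0r.
- by apply/rowP => l; rewrite !mxE; case: l => [[|[|[|[|[|?]]]]] ?] //=; rewrite ?mulr0 ?mulr1 ?addr0 ?add0r.
- move=> i j; case: i => [[|[|[|[|[|?]]]]] ?] //; case: j => [[|[|[|[|[|?]]]]] ?] //;
  rewrite /rows5 /= Cf_mkrow /alphaT /isgen /= /ncc /D /=; ring.
- move=> i j; case: i => [[|[|[|[|[|?]]]]] ?] //; case: j => [[|[|[|[|[|?]]]]] ?] //;
  rewrite /rows5 /= Cf_mkrow !pf_mkrow !mkrowE /alphaT /betaT /tfe /isgen /= /ncc /ndd /npp /nqq /=;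
  move: hD hDt; rewrite -/D => hD hDt; field; by rewrite ?hD ?hDt ?ht.
Qed.

Definition g3 (x0 x1 x3 : CC) : 'rV[CC]_5 := mkrow x0 x1 0 x3 0.
Lemma Cf_dropl cc x0 x1 x2 x3 x4 y :
  Cf cc (mkrow x0 x1 x2 x3 x4) y = Cf cc (g3 x0 x1 x3) y.
Proof. by rewrite /Cf /g3 !mkrowE. Qed.
Lemma Cf_dropr cc x0 x1 x2 x3 x4 y :
  Cf cc y (mkrow x0 x1 x2 x3 x4) = Cf cc y (g3 x0 x1 x3).
Proof. by rewrite /Cf /g3 !mkrowE. Qed.
Lemma pf_drop pp x0 x1 x2 x3 x4 :
  pf pp (mkrow x0 x1 x2 x3 x4) = pf pp (g3 x0 x1 x3).
Proof. by rewrite /pf /g3 !mkrowE. Qed.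
Lemma Cf_g30l cc y : Cf cc (g3 0 0 0) y = 0.
Proof. by rewrite /Cf /g3 !mkrowE; ring. Qed.
Lemma Cf_g30r cc y : Cf cc y (g3 0 0 0) = 0.
Proof. by rewrite /Cf /g3 !mkrowE; ring. Qed.
Lemma pf_g30 pp : pf pp (g3 0 0 0) = 0.
Proof. by rewrite /pf /g3 !mkrowE; ring. Qed.
Lemma Cf_lin3l cc (x0 x1 x3 : CC) a0 a1 a3 b0 b1 b3 k0 k1 k3 y :
  Cf cc (g3 (x0 * a0 + x1 * b0 + x3 * k0) (x0 * a1 + x1 * b1 + x3 * k1) (x0 * a3 + x1 * b3 + x3 * k3)) y
  = x0 * Cf cc (g3 a0 a1 a3) y + x1 * Cf cc (g3 b0 b1 b3) y + x3 * Cf cc (g3 k0 k1 k3) y.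
Proof. rewrite /Cf /g3 !mkrowE; ring. Qed.
Lemma Cf_lin3r cc (x0 x1 x3 : CC) a0 a1 a3 b0 b1 b3 k0 k1 k3 y :
  Cf cc y (g3 (x0 * a0 + x1 * b0 + x3 * k0) (x0 * a1 + x1 * b1 + x3 * k1) (x0 * a3 + x1 * b3 + x3 * k3))
  = x0 * Cf cc y (g3 a0 a1 a3) + x1 * Cf cc y (g3 b0 b1 b3) + x3 * Cf cc y (g3 k0 k1 k3).
Proof. rewrite /Cf /g3 !mkrowE; ring. Qed.
Lemma pf_lin3 pp (x0 x1 x3 : CC) a0 a1 a3 b0 b1 b3 k0 k1 k3 :
  pf pp (g3 (x0 * a0 + x1 * b0 + x3 * k0) (x0 * a1 + x1 * b1 + x3 * k1) (x0 * a3 + x1 * b3 + x3 * k3))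
  = x0 * pf pp (g3 a0 a1 a3) + x1 * pf pp (g3 b0 b1 b3) + x3 * pf pp (g3 k0 k1 k3).
Proof. rewrite /pf /g3 !mkrowE; ring. Qed.

Lemma tiso_B cc dd pp qq a0 a1 a3 b0 b1 b3 k0 k1 k3 :
  let a := g3 a0 a1 a3 in let b := g3 b0 b1 b3 in let k := g3 k0 k1 k3 in
  Cf cc a a = 0 -> Cf cc b b = 0 -> Cf cc k k = 0 -> Cf cc b a = - Cf cc a b ->
  Cf cc a k = 0 -> Cf cc k a = 0 -> Cf cc b k = 0 -> Cf cc k b = 0 ->
  pf pp a = 0 -> pf pp b = 0 -> pf qq a = 0 -> pf qq b = 0 -> pf pp k = - pf qq k ->
  Cf cc a b != 0 -> pf qq k != 0 ->
  let s0 := Cf cc a b * pf qq k in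
  tiso (Tform cc dd pp qq)
    (Nform (Cf dd a a / s0) ((Cf dd a b + Cf dd b a) / s0) (Cf dd b b / s0)
           ((Cf dd k a + Cf dd a k) / s0) ((Cf dd k b + Cf dd b k) / s0) (Cf dd k k / s0)).
Proof.
move=> a b k hCaa hCbb hCkk hCba hCak hCka hCbk hCkb hPa hPb hQa hQb hPk hg hq s0.
have hs0 : s0 != 0 by rewrite mulf_neq0.
pose al := - Cf dd a k / pf qq k.
pose be := - Cf dd b k / pf qq k.
apply: (@tiso_Tform _ _ _ _ _ _ _ _ (rows5 (mkrow a0 a1 al a3 0) (mkrow b0 b1 be b3 0)
   (mkrow 0 0 (Cf cc a b) 0 (- Cf dd b a)) (mkrow k0 k1 0 k3 0) (mkrow 0 0 0 0 s0))
   (Cf cc a b) (- Cf dd b a) s0).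
- move=> x hx.
  have h0 := mkG_rows_eq o0 hx; have h1 := mkG_rows_eq o1 hx; have h2 := mkG_rows_eq o2 hx;
  have h3 := mkG_rows_eq o3 hx; have h4 := mkG_rows_eq o4 hx.
  rewrite !mkrowE ?(mulr0, mul0r, addr0, add0r, mulr1) in h0 h1 h2 h3 h4.
  have e0 : x 0 o0 = 0.
    apply: (mulf0 hg).
    have := Cf_lin3l cc (x 0 o0) (x 0 o1) (x 0 o3) a0 a1 a3 b0 b1 b3 k0 k1 k3 b.
    rewrite h0 h1 h3 Cf_g30l -/a -/b -/k hCbb hCkb => /esym; rewrite !mulr0 !addr0 => ->.
    done.
  have e1 : x 0 o1 = 0.
    apply: (mulf0 hg).
    have := Cf_lin3r cc (x 0 o0) (x 0 o1) (x 0 o3) a0 a1 a3 b0 b1 b3 k0 k1 k3 a.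
    rewrite h0 h1 h3 Cf_g30r -/a -/b -/k hCaa hCak => /esym; rewrite !mulr0 addr0 add0r => ->.
    done.
  have e3 : x 0 o3 = 0.
    apply: (mulf0 hq).
    have := pf_lin3 qq (x 0 o0) (x 0 o1) (x 0 o3) a0 a1 a3 b0 b1 b3 k0 k1 k3.
    rewrite h0 h1 h3 pf_g30 -/a -/b -/k hQa hQb => /esym; rewrite !mulr0 !add0r => ->.
    done.
  have e2 : x 0 o2 = 0.
    by apply: (mulf0 hg); move: h2; rewrite e0 e1 !mul0r !add0r.
  have e4 : x 0 o4 = 0.
    by apply: (mulf0 hs0); move: h4; rewrite e2 !mul0r !add0r.
  exact: rV0.
- by apply/rowP => l; rewrite !mxE; case: l => [[|[|[|[|[|?]]]]] ?] //=; rewrite ?mulr0 ?mulr1 ?addr0 ?add0r.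
- by apply/rowP => l; rewrite !mxE; case: l => [[|[|[|[|[|?]]]]] ?] //=; rewrite ?mulr0 ?mulr1 ?addr0 ?add0r.
- move=> i j; case: i => [[|[|[|[|[|?]]]]] ?] //; case: j => [[|[|[|[|[|?]]]]] ?] //;
  rewrite /rows5 /= ?Cf_dropl ?Cf_dropr ?Cf_g30l ?Cf_g30r -/a -/b -/k /alphaT /isgen /= /ncc /=;
  rewrite ?hCaa ?hCbb ?hCkk ?hCba ?hCak ?hCka ?hCbk ?hCkb; ring.
- move=> i j; case: i => [[|[|[|[|[|?]]]]] ?] //; case: j => [[|[|[|[|[|?]]]]] ?] //;
  rewrite /rows5 /= ?Cf_dropl ?Cf_dropr ?pf_drop ?Cf_g30l ?Cf_g30r ?pf_g30 !mkrowE -/a -/b -/k;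
  rewrite /alphaT /betaT /tfe /isgen /= /ncc /ndd /npp /nqq /=;
  rewrite ?hPa ?hPb ?hQa ?hQb ?hPk /al /be /s0; field; by rewrite ?hq ?hg.
Qed.

Lemma pf_sub pp x0 x1 x3 k0 k1 k3 l :
  pf pp (g3 (x0 - l * k0) (x1 - l * k1) (x3 - l * k3)) = pf pp (g3 x0 x1 x3) - l * pf pp (g3 k0 k1 k3).
Proof. rewrite /pf /g3 !mkrowE; ring. Qed.
Lemma Cf_sub cc x0 x1 x3 y0 y1 y3 k0 k1 k3 l m :
  Cf cc (g3 (x0 - l * k0) (x1 - l * k1) (x3 - l * k3)) (g3 (y0 - m * k0) (y1 - m * k1) (y3 - m * k3))
  = Cf cc (g3 x0 x1 x3) (g3 y0 y1 y3) - l * Cf cc (g3 k0 k1 k3) (g3 y0 y1 y3)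
    - m * Cf cc (g3 x0 x1 x3) (g3 k0 k1 k3) + l * m * Cf cc (g3 k0 k1 k3) (g3 k0 k1 k3).
Proof. rewrite /Cf /g3 !mkrowE; ring. Qed.
Lemma Cf_subl cc x0 x1 x3 y k0 k1 k3 l :
  Cf cc (g3 (x0 - l * k0) (x1 - l * k1) (x3 - l * k3)) y
  = Cf cc (g3 x0 x1 x3) y - l * Cf cc (g3 k0 k1 k3) y.
Proof. rewrite /Cf /g3 !mkrowE; ring. Qed.
Lemma Cf_subr cc x0 x1 x3 y k0 k1 k3 l :
  Cf cc y (g3 (x0 - l * k0) (x1 - l * k1) (x3 - l * k3))
  = Cf cc y (g3 x0 x1 x3) - l * Cf cc y (g3 k0 k1 k3).
Proof. rewrite /Cf /g3 !mkrowE; ring. Qed.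

Section Antisym.
Variables (cc : 'I_5 -> 'I_5 -> CC).
Hypotheses (h00 : cc o0 o0 = 0) (h11 : cc o1 o1 = 0) (h33 : cc o3 o3 = 0)
  (h10 : cc o1 o0 = - cc o0 o1) (h30 : cc o3 o0 = - cc o0 o3) (h31 : cc o3 o1 = - cc o1 o3).
Definition kv := g3 (cc o1 o3) (- cc o0 o3) (cc o0 o1).
Lemma Cf_kl y : Cf cc kv y = 0.
Proof. rewrite /Cf /kv /g3 !mkrowE h00 h11 h33 h10 h30 h31; ring. Qed.
Lemma Cf_kr y : Cf cc y kv = 0.
Proof. rewrite /Cf /kv /g3 !mkrowE h00 h11 h33 h10 h30 h31; ring. Qed.
Lemma Cf_xx y : Cf cc y y = 0.
Proof. rewrite /Cf h00 h11 h33 h10 h30 h31; ring. Qed.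
Lemma Cf_anti x y : Cf cc y x = - Cf cc x y.
Proof. rewrite /Cf h00 h11 h33 h10 h30 h31; ring. Qed.
End Antisym.

Lemma stepB_fin cc dd pp qq x0 x1 x3 y0 y1 y3 :
  cc o0 o0 = 0 -> cc o1 o1 = 0 -> cc o3 o3 = 0 -> cc o1 o0 = - cc o0 o1 ->
  cc o3 o0 = - cc o0 o3 -> cc o3 o1 = - cc o1 o3 ->
  (forall v, pf pp v = - pf qq v) ->
  pf qq (kv cc) != 0 -> Cf cc (g3 x0 x1 x3) (g3 y0 y1 y3) != 0 ->
  exists m11 m12 m22 v1 v2 s, tiso (Tform cc dd pp qq) (Nform m11 m12 m22 v1 v2 s).
Proof.
move=> h00 h11 h33 h10 h30 h31 hpq hq hg.
have Ckl := Cf_kl h00 h11 h33 h10 h30 h31.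
have Ckr := Cf_kr h00 h11 h33 h10 h30 h31.
have Cxx := Cf_xx h00 h11 h33 h10 h30 h31.
have Can := Cf_anti h00 h11 h33 h10 h30 h31.
move: hq Ckl Ckr; rewrite /kv => hq Ckl Ckr.
set k0 := cc o1 o3 in hq Ckl Ckr *; set k1 := - cc o0 o3 in hq Ckl Ckr *; set k3 := cc o0 o1 in hq Ckl Ckr *.
set l := pf qq (g3 x0 x1 x3) / pf qq (g3 k0 k1 k3).
set m := pf qq (g3 y0 y1 y3) / pf qq (g3 k0 k1 k3).
have hab : Cf cc (g3 (x0 - l * k0) (x1 - l * k1) (x3 - l * k3)) (g3 (y0 - m * k0) (y1 - m * k1) (y3 - m * k3))
    = Cf cc (g3 x0 x1 x3) (g3 y0 y1 y3) by rewrite Cf_sub !Ckl !Ckr; ring.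
do 6 eexists.
apply: (@tiso_B cc dd pp qq (x0 - l * k0) (x1 - l * k1) (x3 - l * k3)
   (y0 - m * k0) (y1 - m * k1) (y3 - m * k3) k0 k1 k3).
- exact: Cxx.
- exact: Cxx.
- exact: Cxx.
- exact: Can.
- by rewrite Cf_subl ?Ckl ?Ckr; ring.
- by rewrite Cf_subr ?Ckl ?Ckr; ring.
- by rewrite Cf_subl ?Ckl ?Ckr; ring.
- by rewrite Cf_subr ?Ckl ?Ckr; ring.
- by rewrite hpq pf_sub /l; field.
- by rewrite hpq pf_sub /m; field.
- by rewrite pf_sub /l; field.
- by rewrite pf_sub /m; field.
- exact: hpq.
- by rewrite hab.
- exact: hq.
Qed.

Definition E_T cc (pp qq : 'I_5 -> CC) (x y z : 'rV[CC]_5) : CC :=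
  Cf cc x y * pf qq z - Cf cc x z * pf qq y - Cf cc y z * pf pp x.

Lemma Cf_addl cc x y z : Cf cc (x + y) z = Cf cc x z + Cf cc y z.
Proof. rewrite /Cf !mxE; ring. Qed.
Lemma pf_add pp x y : pf pp (x + y) = pf pp x + pf pp y.
Proof. rewrite /pf !mxE; ring. Qed.
Lemma pf_g3 pp x0 x1 x3 : pf pp (g3 x0 x1 x3) = x0 * pp o0 + x1 * pp o1 + x3 * pp o3.
Proof. by rewrite /pf /g3 !mkrowE. Qed.

Lemma det_identity cc pp qq x y z :
  cc o0 o0 = 0 -> cc o1 o1 = 0 -> cc o3 o3 = 0 -> cc o1 o0 = - cc o0 o1 ->
  cc o3 o0 = - cc o0 o3 -> cc o3 o1 = - cc o1 o3 ->
  (forall v, pf pp v = - pf qq v) ->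
  E_T cc pp qq x y z = pf qq (kv cc) *
    (x 0 o0 * (y 0 o1 * z 0 o3 - y 0 o3 * z 0 o1) - x 0 o1 * (y 0 o0 * z 0 o3 - y 0 o3 * z 0 o0)
     + x 0 o3 * (y 0 o0 * z 0 o1 - y 0 o1 * z 0 o0)).
Proof.
move=> h00 h11 h33 h10 h30 h31 hpq.
rewrite /E_T hpq pf_g3 /kv /Cf /pf h00 h11 h33 h10 h30 h31; ring.
Qed.

Lemma stepB_p0 cc pp qq x y z :
  pp o0 = 0 -> pp o1 = 0 -> pp o3 = 0 ->
  (forall x z, E_T cc pp qq x x z = 0) -> E_T cc pp qq x y z = 0.
Proof.
move=> p0 p1 p3 h1.
have [q0|] := boolP [&& qq o0 == 0, qq o1 == 0 & qq o3 == 0].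
  case/and3P: q0 => /eqP q0 /eqP q1 /eqP q3.
  rewrite /E_T /pf p0 p1 p3 q0 q1 q3; ring.
have key : forall w, pf qq w != 0 -> E_T cc pp qq x y z = 0.
  move=> w hw; apply: (mulf0 (y := pf qq w ^+ 2)); first by rewrite expf_neq0.
  have -> : E_T cc pp qq x y z * pf qq w ^+ 2 =
    pf qq x * (- pf qq y * E_T cc pp qq w w z + pf qq z * E_T cc pp qq w w y) +
    pf qq w * (- pf qq z * (E_T cc pp qq (x + w) (x + w) y - E_T cc pp qq x x y - E_T cc pp qq w w y)
      + pf qq y * (E_T cc pp qq (x + w) (x + w) z - E_T cc pp qq x x z - E_T cc pp qq w w z)).
    rewrite /E_T /Cf /pf !mxE p0 p1 p3; ring.
  by rewrite !h1; ring.
rewrite negb_and => /orP [hq|]; first by apply: (key (g3 1 0 0)); rewrite pf_g3; apply: contra hq => /eqP <-; apply/eqP; ring.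
rewrite negb_and => /orP [hq|hq]; first by apply: (key (g3 0 1 0)); rewrite pf_g3; apply: contra hq => /eqP <-; apply/eqP; ring.
by apply: (key (g3 0 0 1)); rewrite pf_g3; apply: contra hq => /eqP <-; apply/eqP; ring.
Qed.

Lemma stepB cc dd pp qq :
  (forall x z, E_T cc pp qq x x z = 0) -> (forall x z, E_T cc pp qq x z z = 0) ->
  (forall x y z, E_T cc pp qq x y z = 0) \/
  exists m11 m12 m22 v1 v2 s, tiso (Tform cc dd pp qq) (Nform m11 m12 m22 v1 v2 s).
Proof.
move=> h1 h3.
have [p0|pn] := boolP [&& pp o0 == 0, pp o1 == 0 & pp o3 == 0].
  case/and3P: p0 => /eqP p0 /eqP p1 /eqP p3; left => x y z; exact: stepB_p0.
have [x0 hx0] : exists x0, pf pp x0 != 0.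
  move: pn; rewrite !negb_and => /orP [hp|/orP [hp|hp]];
  [exists (g3 1 0 0) | exists (g3 0 1 0) | exists (g3 0 0 1)]; rewrite pf_g3;
  by apply: contra hp => /eqP <-; apply/eqP; ring.
have hzz : forall z, Cf cc z z = 0.
  move=> z; apply: (mulf0 hx0); have := h3 x0 z; rewrite /E_T => H.
  by apply/eqP; rewrite -oppr_eq0; apply/eqP; rewrite -H; ring.
have h00 : cc o0 o0 = 0 by rewrite -(hzz (g3 1 0 0)) /Cf /g3 !mkrowE; ring.
have h11 : cc o1 o1 = 0 by rewrite -(hzz (g3 0 1 0)) /Cf /g3 !mkrowE; ring.
have h33 : cc o3 o3 = 0 by rewrite -(hzz (g3 0 0 1)) /Cf /g3 !mkrowE; ring.
have h10 : cc o1 o0 = - cc o0 o1.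
  by apply/eqP; rewrite -subr_eq0 opprK; apply/eqP; rewrite -(hzz (g3 1 1 0)) /Cf /g3 !mkrowE h00 h11; ring.
have h30 : cc o3 o0 = - cc o0 o3.
  by apply/eqP; rewrite -subr_eq0 opprK; apply/eqP; rewrite -(hzz (g3 1 0 1)) /Cf /g3 !mkrowE h00 h33; ring.
have h31 : cc o3 o1 = - cc o1 o3.
  by apply/eqP; rewrite -subr_eq0 opprK; apply/eqP; rewrite -(hzz (g3 0 1 1)) /Cf /g3 !mkrowE h11 h33; ring.
have [c0|cn] := boolP [&& cc o0 o1 == 0, cc o0 o3 == 0 & cc o1 o3 == 0].
  case/and3P: c0 => /eqP c01 /eqP c03 /eqP c13; left => x y z.
  rewrite /E_T /Cf h00 h11 h33 h10 h30 h31 c01 c03 c13; ring.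
have [a0 [b0 [A0 [A1 [A3 [B0 [B1 [B3 [-> -> hab]]]]]]]]] : exists a0 b0 A0 A1 A3 B0 B1 B3,
    [/\ a0 = g3 A0 A1 A3, b0 = g3 B0 B1 B3 & Cf cc a0 b0 != 0].
  move: cn; rewrite !negb_and => /orP [hc|/orP [hc|hc]].
  - exists (g3 1 0 0), (g3 0 1 0), 1, 0, 0, 0, 1, 0; split => //.
    by rewrite /Cf /g3 !mkrowE; apply: contra hc => /eqP <-; apply/eqP; ring.
  - exists (g3 1 0 0), (g3 0 0 1), 1, 0, 0, 0, 0, 1; split => //.
    by rewrite /Cf /g3 !mkrowE; apply: contra hc => /eqP <-; apply/eqP; ring.
  - exists (g3 0 1 0), (g3 0 0 1), 0, 1, 0, 0, 0, 1; split => //.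
    by rewrite /Cf /g3 !mkrowE; apply: contra hc => /eqP <-; apply/eqP; ring.
have hR : forall x z, Cf cc x z * (pf pp x + pf qq x) = 0.
  move=> x z; have := h1 x z; rewrite /E_T hzz => H.
  by apply/eqP; rewrite -oppr_eq0; apply/eqP; rewrite -H; ring.
have hpq : forall v, pf pp v = - pf qq v.
  move=> v; apply/eqP; rewrite -subr_eq0 opprK; apply/negPn/negP => hv.
  have hC : forall z, Cf cc v z = 0 by move=> z; apply: (mulf0 hv); exact: hR.
  have [ha|ha] := eqVneq (pf pp (g3 A0 A1 A3) + pf qq (g3 A0 A1 A3)) 0.
    have hv' : pf pp (g3 A0 A1 A3 + v) + pf qq (g3 A0 A1 A3 + v) != 0.
      by rewrite !pf_add addrACA ha add0r.
    have := hR (g3 A0 A1 A3 + v) (g3 B0 B1 B3); rewrite Cf_addl hC addr0 => /eqP.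
    by rewrite mulf_eq0 (negbTE hab) (negbTE hv').
  have := hR (g3 A0 A1 A3) (g3 B0 B1 B3) => /eqP.
  by rewrite mulf_eq0 (negbTE hab) (negbTE ha).
have [qk|qk] := eqVneq (pf qq (kv cc)) 0.
  left => x y z; by rewrite (det_identity _ _ _ h00 h11 h33 h10 h30 h31 hpq) qk mul0r.
right; exact: (stepB_fin dd h00 h11 h33 h10 h30 h31 hpq qk hab).
Qed.

Lemma mulscDZl c a (x x' y : 'rV[CC]_5) :
  mulsc c (a *: x + x') y = a *: mulsc c x y + mulsc c x' y.
Proof.
rewrite /mulsc scaler_sumr -big_split; apply: eq_bigr => i _.
rewrite scaler_sumr -big_split; apply: eq_bigr => j _.
by rewrite !mxE scalerA mulrDl mulrA scalerDl.
Qed.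
Lemma mulscDZr c a (x y y' : 'rV[CC]_5) :
  mulsc c x (a *: y + y') = a *: mulsc c x y + mulsc c x y'.
Proof.
rewrite /mulsc scaler_sumr -big_split; apply: eq_bigr => i _.
rewrite scaler_sumr -big_split; apply: eq_bigr => j _.
by rewrite !mxE scalerA mulrDr mulrCA scalerDl.
Qed.
Lemma mulsc0l c y : mulsc c 0 y = 0.
Proof. by rewrite /mulsc big1 // => i _; rewrite big1 // => j _; rewrite mxE mul0r scale0r. Qed.
Lemma mulsc0r c x : mulsc c x 0 = 0.
Proof. by rewrite /mulsc big1 // => i _; rewrite big1 // => j _; rewrite mxE mulr0 scale0r. Qed.
Lemma mulscDl c (x x' y : 'rV[CC]_5) : mulsc c (x + x') y = mulsc c x y + mulsc c x' y.
Proof. by have := mulscDZl c 1 x x' y; rewrite !scale1r. Qed.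
Lemma mulscDr c (x y y' : 'rV[CC]_5) : mulsc c x (y + y') = mulsc c x y + mulsc c x y'.
Proof. by have := mulscDZr c 1 x y y'; rewrite !scale1r. Qed.
Lemma mulsc_suml c (I : finType) (a : I -> CC) (u : I -> 'rV[CC]_5) y :
  mulsc c (\sum_i a i *: u i) y = \sum_i a i *: mulsc c (u i) y.
Proof.
apply: (big_ind2 (fun X Y => mulsc c X y = Y)); first exact: mulsc0l.
  by move=> x1 x2 y1 y2 <- <-; apply: mulscDl.
by move=> i _; rewrite -[a i *: u i]addr0 mulscDZl mulsc0l addr0.
Qed.
Lemma mulsc_sumr c (I : finType) (a : I -> CC) (u : I -> 'rV[CC]_5) x :
  mulsc c x (\sum_i a i *: u i) = \sum_i a i *: mulsc c x (u i).
Proof.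
apply: (big_ind2 (fun X Y => mulsc c x X = Y)); first exact: mulsc0r.
  by move=> x1 x2 y1 y2 <- <-; apply: mulscDr.
by move=> i _; rewrite -[a i *: u i]addr0 mulscDZr mulsc0r addr0.
Qed.

Lemma tiso_mulsc c c' (G : 'M[CC]_5) :
  (forall i j, mulsc c (row i G) (row j G) = c' i j *m G) ->
  forall r s : 'rV[CC]_5, mulsc c (r *m G) (s *m G) = mulsc c' r s *m G.
Proof.
move=> h r s; rewrite (mulmx_sum_row r G) (mulmx_sum_row s G) mulsc_suml.
transitivity (\sum_i r 0 i *: \sum_j s 0 j *: (c' i j *m G)).
  by apply: eq_bigr => i _; rewrite mulsc_sumr; congr (_ *: _); apply: eq_bigr => j _; rewrite h.
rewrite [mulsc c' r s]/mulsc mulmx_suml; apply: eq_bigr => i _.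
rewrite scaler_sumr mulmx_suml; apply: eq_bigr => j _.
by rewrite scalerA -scalemxAl.
Qed.

Lemma unit_of_inj (G : 'M[CC]_5) :
  (forall r : 'rV[CC]_5, r *m G = 0 -> r = 0) -> G \in unitmx.
Proof.
move=> h; rewrite -row_free_unit -kermx_eq0; apply/eqP/row_matrixP => i.
by rewrite row0; apply: h; rewrite -row_mul mulmx_ker row0.
Qed.

Lemma Cf_E24l cc a b z : Cf cc (a *: E 2 + b *: E 4) z = 0.
Proof. rewrite /Cf !mxE /=; ring. Qed.
Lemma Cf_E24r cc a b z : Cf cc z (a *: E 2 + b *: E 4) = 0.
Proof. rewrite /Cf !mxE /=; ring. Qed.
Lemma pf_E24 pp a b : pf pp (a *: E 2 + b *: E 4) = 0.
Proof. rewrite /pf !mxE /=; ring. Qed.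
Lemma E24_2 a b : (a *: E 2 + b *: E 4) 0 o2 = a.
Proof. rewrite !mxE /=; ring. Qed.

Lemma Ls_formula cc dd pp qq x y z :
  let M := mulsc (Tform cc dd pp qq) in
  M (M x y) z - M (M x z) y - M x (M y z) = E_T cc pp qq x y z *: E 4.
Proof.
rewrite /= !mulsc_Tform !Cf_E24l !Cf_E24r !pf_E24 !E24_2.
apply/rowP => l; rewrite /E_T !mxE.
case: l => [[|[|[|[|[|?]]]]] ?] //=; ring.
Qed.
Section StepC.
Variable Iso : ('I_5 -> 'I_5 -> 'rV[CC]_5) -> Prop.
Hypothesis Iso_tiso : forall c c', Iso c -> tiso c c' -> Iso c'.

Lemma moveI m11 m12 m22 v1 v2 s a b c d t m11' m12' m22' v1' v2' s' :
  Iso (Nform m11 m12 m22 v1 v2 s) -> a * d - b * c != 0 -> t != 0 ->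
  (a^+2 * m11 + a * b * m12 + b^+2 * m22) / ((a * d - b * c) * t) = m11' ->
  (2 * a * c * m11 + (a * d + b * c) * m12 + 2 * b * d * m22) / ((a * d - b * c) * t) = m12' ->
  (c^+2 * m11 + c * d * m12 + d^+2 * m22) / ((a * d - b * c) * t) = m22' ->
  (a * v1 + b * v2) / (a * d - b * c) = v1' ->
  (c * v1 + d * v2) / (a * d - b * c) = v2' ->
  t * s / (a * d - b * c) = s' ->
  Iso (Nform m11' m12' m22' v1' v2' s').
Proof.
move=> h hD ht <- <- <- <- <- <-; apply: Iso_tiso h _; exact: tiso_move.
Qed.

Ltac nzsolve := rewrite ?(mulr1, mul1r, mul0r, mulr0, subr0, sub0r, oppr_eq0, mulrN, mulNr, opprK, invr_eq0, oner_neq0, mulf_neq0, pnatr_eq0) //.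
Ltac fsolve := first [ done | by nzsolve | field; repeat (apply/andP; split); by nzsolve ].

Lemma rank0 v1 v2 s : Iso (Nform 0 0 0 v1 v2 s) ->
  Iso (Nform 0 0 0 0 0 0) \/ Iso (Nform 0 0 0 0 0 1) \/
  Iso (Nform 0 0 0 1 0 0) \/ Iso (Nform 0 0 0 1 0 1).
Proof.
move=> h.
have [v0|vn] := boolP ((v1 == 0) && (v2 == 0)).
  case/andP: v0 => /eqP e1 /eqP e2; subst v1 v2.
  have [s0|sn] := eqVneq s 0; first by subst s; left.
  right; left; apply: (moveI (a:=1) (b:=0) (c:=0) (d:=1) (t:=s^-1) h);
    fsolve.
have h' : exists D, [/\ D != 0 & Iso (Nform 0 0 0 1 0 (s / D))].
  have [e1|n1] := eqVneq v1 0.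
    subst v1; have n2 : v2 != 0 by move: vn; rewrite eqxx.
    exists v2; split => //; apply: (moveI (a:=0) (b:=1) (c:=-v2) (d:=0) (t:=1) h); fsolve.
  exists v1; split => //; apply: (moveI (a:=1) (b:=0) (c:=-v2) (d:=v1) (t:=1) h); fsolve.
case: h' => D [hD h2].
have [s0|sn] := eqVneq s 0.
  subst s; right; right; left; move: h2; by rewrite mul0r.
right; right; right; apply: (moveI (a:=1) (b:=0) (c:=0) (d:=1) (t:=D / s) h2); fsolve.
Qed.

Lemma rank2a v1 s : v1 != 0 -> Iso (Nform 0 1 0 v1 0 s) ->
  Iso (Nform 0 1 0 1 0 0) \/ Iso (Nform 0 1 0 1 0 1).
Proof.
move=> n1 h.
have [s0|sn] := eqVneq s 0.
  subst s; left; apply: (moveI (a:=1) (b:=0) (c:=0) (d:=v1) (t:=1) h); fsolve.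
right; apply: (moveI (a:=s/v1) (b:=0) (c:=0) (d:=v1) (t:=1) h); fsolve.
Qed.

Lemma rank2 v1 v2 s : Iso (Nform 0 1 0 v1 v2 s) ->
  Iso (Nform 0 1 0 0 0 0) \/ Iso (Nform 0 1 0 1 0 0) \/ Iso (Nform 0 1 0 0 0 1) \/
  Iso (Nform 0 1 0 1 0 1) \/ exists al, Iso (Nform 0 1 0 1 1 al).
Proof.
move=> h.
have [e1|n1] := eqVneq v1 0; have [e2|n2] := eqVneq v2 0.
- subst v1 v2; have [s0|sn] := eqVneq s 0; first by subst s; left.
  right; right; left; apply: (moveI (a:=s) (b:=0) (c:=0) (d:=1) (t:=1) h); fsolve.
- subst v1.
  have h' : Iso (Nform 0 1 0 (- v2) 0 s).
    apply: (moveI (a:=0) (b:=1) (c:=1) (d:=0) (t:=-1) h); fsolve.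
  have n2' : - v2 != 0 by rewrite oppr_eq0.
  by case: (rank2a n2' h') => H; [right; left | do 3 right; left].
- subst v2; by case: (rank2a n1 h) => H; [right; left | do 3 right; left].
- right; right; right; right; exists (s / (v1 * v2)).
  apply: (moveI (a:=v2) (b:=0) (c:=0) (d:=v1) (t:=1) h); fsolve.
Qed.

Lemma sqrt_ex (s : CC) : s != 0 -> exists r : CC, r != 0 /\ s = r ^+ 2.
Proof.
move=> sn; exists (sqrtc s); rewrite sqr_sqrtc sqrtc_eq0; split => //.
Qed.

Lemma rank1 v1 v2 s : Iso (Nform 1 0 0 v1 v2 s) ->
  Iso (Nform 1 0 0 0 0 0) \/ Iso (Nform 1 0 0 0 0 1) \/
  (exists al, Iso (Nform 1 0 0 1 0 al)) \/
  Iso (Nform 1 0 0 0 1 0) \/ Iso (Nform 1 0 0 0 1 1).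
Proof.
move=> h.
have [e2|n2] := eqVneq v2 0.
  subst v2; have [e1|n1] := eqVneq v1 0.
    subst v1; have [s0|sn] := eqVneq s 0; first by subst s; left.
    have [r [rn es]] := sqrt_ex sn; subst s.
    right; left; apply: (moveI (a:=1) (b:=0) (c:=0) (d:=r) (t:=r^-1) h); fsolve.
  right; right; left; exists (s / v1 ^+ 2).
  apply: (moveI (a:=1) (b:=0) (c:=0) (d:=v1) (t:=v1^-1) h); fsolve.
have [s0|sn] := eqVneq s 0.
  subst s; right; right; right; left.
  apply: (moveI (a:=v2) (b:=-v1) (c:=0) (d:=1) (t:=v2) h); fsolve.
have [r [rn es]] := sqrt_ex sn; subst s.
right; right; right; right.
apply: (moveI (a:=v2) (b:=-v1) (c:=0) (d:=r) (t:=v2/r) h); fsolve.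
Qed.

Lemma to_rank1 m11 m12 m22 v1 v2 s :
  ~~ [&& m11 == 0, m12 == 0 & m22 == 0] -> m12 ^+ 2 - 4 * m11 * m22 = 0 ->
  Iso (Nform m11 m12 m22 v1 v2 s) -> exists v1' v2' s', Iso (Nform 1 0 0 v1' v2' s').
Proof.
move=> nz dz h.
have [e11|n11] := eqVneq m11 0.
  subst m11; have e12 : m12 = 0.
    have : m12 ^+ 2 = 0 by rewrite -dz; ring.
    by move/eqP; rewrite expf_eq0 => /andP [_ /eqP].
  subst m12; have n22 : m22 != 0 by move: nz; rewrite !eqxx.
  do 3 eexists; apply: (moveI (a:=0) (b:=1) (c:=1) (d:=0) (t:=-m22) h); try reflexivity; fsolve.
have e22 : m22 = m12 ^+ 2 / (4 * m11).
  apply: (mulIf (x := 4 * m11)); first by rewrite mulf_neq0 // pnatr_eq0.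
  rewrite mulfVK ?mulf_neq0 ?pnatr_eq0 //; apply/eqP; rewrite -subr_eq0; apply/eqP.
  have -> : m22 * (4 * m11) - m12 ^+ 2 = - (m12 ^+ 2 - 4 * m11 * m22) by ring.
  by rewrite dz oppr0.
subst m22.
do 3 eexists; apply: (moveI (a:=1) (b:=0) (c:=-m12) (d:=2 * m11) (t:=2^-1) h); try reflexivity; fsolve.
Qed.

Lemma to_rank2 m11 m12 m22 v1 v2 s :
  m12 ^+ 2 - 4 * m11 * m22 != 0 ->
  Iso (Nform m11 m12 m22 v1 v2 s) -> exists v1' v2' s', Iso (Nform 0 1 0 v1' v2' s').
Proof.
move=> dn h.
have [e11|n11] := eqVneq m11 0.
  subst m11; have n12 : m12 != 0.
    by apply: contraNneq dn => ->; rewrite ?(mul0r, mulr0, subr0, expr0n).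
  do 3 eexists; apply: (moveI (a:=1) (b:=0) (c:=-m22) (d:=m12) (t:=m12) h); try reflexivity; fsolve.
have [r [rn er]] := sqrt_ex dn.
have e22 : m22 = (m12 ^+ 2 - r ^+ 2) / (4 * m11).
  apply: (mulIf (x := 4 * m11)); first by rewrite mulf_neq0 // pnatr_eq0.
  rewrite mulfVK ?mulf_neq0 ?pnatr_eq0 // -er; ring.
subst m22.
have hD : (r - m12) / (2 * m11) * 1 - 1 * ((- r - m12) / (2 * m11)) = r / m11.
  by field; rewrite ?pnatr_eq0.
do 3 eexists; apply: (moveI (a:=(r - m12) / (2 * m11)) (b:=1) (c:=(- r - m12) / (2 * m11)) (d:=1) (t:=-r) h);
  try reflexivity; rewrite ?hD; fsolve.
Qed.

Lemma stepC m11 m12 m22 v1 v2 s : Iso (Nform m11 m12 m22 v1 v2 s) ->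
  Iso (Nform 0 0 0 0 0 0) \/ Iso (Nform 0 0 0 0 0 1) \/
  Iso (Nform 0 0 0 1 0 0) \/ Iso (Nform 0 0 0 1 0 1) \/
  Iso (Nform 0 1 0 0 0 0) \/ Iso (Nform 0 1 0 1 0 0) \/ Iso (Nform 0 1 0 0 0 1) \/
  Iso (Nform 0 1 0 1 0 1) \/ (exists al, Iso (Nform 0 1 0 1 1 al)) \/
  Iso (Nform 1 0 0 0 0 0) \/ Iso (Nform 1 0 0 0 0 1) \/
  (exists al, Iso (Nform 1 0 0 1 0 al)) \/
  Iso (Nform 1 0 0 0 1 0) \/ Iso (Nform 1 0 0 0 1 1).
Proof.
move=> h.
have [z|nz] := boolP [&& m11 == 0, m12 == 0 & m22 == 0].
  case/and3P: z => /eqP e1 /eqP e2 /eqP e3; subst.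
  by case: (rank0 h) => [H|[H|[H|H]]]; [left | right; left | do 2 right; left | do 3 right; left].
have [dz|dn] := eqVneq (m12 ^+ 2 - 4 * m11 * m22) 0.
  have [v1' [v2' [s' h']]] := to_rank1 nz dz h.
  by case: (rank1 h') => [H|[H|[H|[H|H]]]]; [do 9 right; left | do 10 right; left | do 11 right; left | do 12 right; left | do 13 right].
have [v1' [v2' [s' h']]] := to_rank2 dn h.
by case: (rank2 h') => [H|[H|[H|[H|H]]]]; [do 4 right; left | do 5 right; left | do 6 right; left | do 7 right; left | do 8 right; left].
Qed.
End StepC.




Lemma E24_4 a b : (a *: E 2 + b *: E 4) 0 o4 = b.
Proof. rewrite !mxE /=; ring. Qed.
Lemma E4_4 b : (b *: E 4) 0 o4 = b.
Proof. rewrite !mxE /=; ring. Qed.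

Lemma forall5 (P : 'I_5 -> Prop) : P o0 -> P o1 -> P o2 -> P o3 -> P o4 -> forall i, P i.
Proof.
move=> p0 p1 p2 p3 p4 [[|[|[|[|[|?]]]]] hi] //.
- by have -> : Ordinal hi = o0 by apply: val_inj.
- by have -> : Ordinal hi = o1 by apply: val_inj.
- by have -> : Ordinal hi = o2 by apply: val_inj.
- by have -> : Ordinal hi = o3 by apply: val_inj.
- by have -> : Ordinal hi = o4 by apply: val_inj.
Qed.

Lemma Tform_of (c : 'I_5 -> 'I_5 -> 'rV[CC]_5) :
  (forall i j, c i j = c i j 0 o2 *: E 2 + c i j 0 o4 *: E 4) ->
  (forall i, c i o2 = c i o2 0 o4 *: E 4) ->
  (forall j, c o2 j = c o2 j 0 o4 *: E 4) ->
  c o2 o2 = 0 -> (forall i, c i o4 = 0) -> (forall i, c o4 i = 0) ->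
  forall i j, c i j = Tform (fun i j => c i j 0 o2) (fun i j => c i j 0 o4)
                            (fun i => c i o2 0 o4) (fun j => c o2 j 0 o4) i j.
Proof.
move=> h1 h2 h3 h4 h5 h6.
apply: forall5; apply: forall5; rewrite /Tform /isgen /=;
  first [exact: h1 | exact: h2 | exact: h3 | exact: h4 | exact: h5 | exact: h6].
Qed.

Section VLevel.
Variables (V : vectType CC) (mul : V -> V -> V).
Hypothesis Hbil : bilinear_prod mul.

Lemma mulDZr x a u v : mul x (a *: u + v) = a *: mul x u + mul x v.
Proof. exact: (Hbil.1 x a u v). Qed.
Lemma mulDZl y a u v : mul (a *: u + v) y = a *: mul u y + mul v y.
Proof. exact: (Hbil.2 y a u v). Qed.
Lemma mulr0V x : mul x 0 = 0.
Proof.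
have := mulDZr x 1 0 0; rewrite !scale1r !addr0 => H.
by apply: (@addrI _ (mul x 0)); rewrite addr0 -H.
Qed.
Lemma mul0rV x : mul 0 x = 0.
Proof.
have := mulDZl x 1 0 0; rewrite !scale1r !addr0 => H.
by apply: (@addrI _ (mul 0 x)); rewrite addr0 -H.
Qed.
Lemma mulDrV x u v : mul x (u + v) = mul x u + mul x v.
Proof. by have := mulDZr x 1 u v; rewrite !scale1r. Qed.
Lemma mulDlV y u v : mul (u + v) y = mul u y + mul v y.
Proof. by have := mulDZl y 1 u v; rewrite !scale1r. Qed.
Lemma mulZrV x a u : mul x (a *: u) = a *: mul x u.
Proof. by have := mulDZr x a u 0; rewrite !addr0 mulr0V addr0. Qed.
Lemma mulZlV y a u : mul (a *: u) y = a *: mul u y.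
Proof. by have := mulDZl y a u 0; rewrite !addr0 mul0rV addr0. Qed.
Lemma mulNrV x u : mul x (- u) = - mul x u.
Proof. by apply/eqP; rewrite -addr_eq0 -mulDrV addNr mulr0V. Qed.
Lemma mulNlV x u : mul (- u) x = - mul u x.
Proof. by apply/eqP; rewrite -addr_eq0 -mulDlV addNr mul0rV. Qed.
Lemma mulBrV x u v : mul x (u - v) = mul x u - mul x v.
Proof. by rewrite mulDrV mulNrV. Qed.
Lemma mulBlV x u v : mul (u - v) x = mul u x - mul v x.
Proof. by rewrite mulDlV mulNlV. Qed.
Lemma mul_sumZl (I : Type) (r : seq I) (a : I -> CC) (u : I -> V) y :
  mul (\sum_(i <- r) a i *: u i) y = \sum_(i <- r) a i *: mul (u i) y.
Proof.
elim: r => [|i r IH]; first by rewrite !big_nil mul0rV.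
by rewrite !big_cons mulDlV mulZlV IH.
Qed.
Lemma mul_sumZr (I : Type) (r : seq I) (a : I -> CC) (u : I -> V) x :
  mul x (\sum_(i <- r) a i *: u i) = \sum_(i <- r) a i *: mul x (u i).
Proof.
elim: r => [|i r IH]; first by rewrite !big_nil mulr0V.
by rewrite !big_cons mulDrV mulZrV IH.
Qed.

Definition Lv x y z := mul (mul x y) z - mul (mul x z) y - mul x (mul y z).

Lemma gen2_a a b : gen2 mul a b a. Proof. by move=> U. Qed.
Lemma gen2_b a b : gen2 mul a b b. Proof. by move=> U. Qed.
Lemma gen2_mul a b x y : gen2 mul a b x -> gen2 mul a b y -> gen2 mul a b (mul x y).
Proof. by move=> hx hy U ha hb hU; apply: (hU _ _ (hx U ha hb hU) (hy U ha hb hU)). Qed.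

Lemma Lv0 a b x y z : binary_leibniz mul -> gen2 mul a b x -> gen2 mul a b y -> gen2 mul a b z ->
  Lv x y z = 0.
Proof. by move=> H hx hy hz; rewrite /Lv (H a b x y z hx hy hz) [mul (mul x z) y + _]addrC addrK subrr. Qed.

Lemma leib_of_Lv : (forall x y z, Lv x y z = 0) -> is_leibniz mul.
Proof.
move=> H x y z _ _ _; apply/eqP; rewrite -subr_eq0 opprD addrA; apply/eqP; exact: H.
Qed.

Lemma iso_ext c c' : (forall i j, c i j = c' i j) -> iso_to mul c -> iso_to mul c'.
Proof.
move=> h [f [hl hb hm]]; exists f; split => // x y; rewrite hm /mulsc.
by apply: eq_bigr => i _; apply: eq_bigr => j _; rewrite h.
Qed.

Lemma iso_change c c' : iso_to mul c -> tiso c c' -> iso_to mul c'.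
Proof.
move=> [f [hl [g fK gK] hm]] [G [hinj hG]].
have uG := unit_of_inj hinj.
exists (fun v => f v *m invmx G); split.
- move=> a u v /=; by rewrite hl mulmxDl scalemxAl.
- exists (fun r => g (r *m G)) => [v|r] /=; first by rewrite mulmxKV // fK.
  by rewrite gK mulmxK.
- move=> x y /=; rewrite hm.
  have ex : f x = (f x *m invmx G) *m G by rewrite mulmxKV.
  have ey : f y = (f y *m invmx G) *m G by rewrite mulmxKV.
  by rewrite {1}ex {1}ey (tiso_mulsc hG) mulmxK.
Qed.


Definition fco (X : 5.-tuple V) (v : V) : 'rV[CC]_5 := \row_i coord X i v.
Lemma fcoD X a u v : fco X (a *: u + v) = a *: fco X u + fco X v.
Proof. by apply/rowP => i; rewrite !mxE linearP. Qed.
Lemma fco0 X : fco X 0 = 0.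
Proof. by apply/rowP => i; rewrite !mxE linear0. Qed.
Lemma fco_sumZ X (I : Type) (r : seq I) (a : I -> CC) (u : I -> V) :
  fco X (\sum_(i <- r) a i *: u i) = \sum_(i <- r) a i *: fco X (u i).
Proof.
elim: r => [|i r IH]; first by rewrite !big_nil fco0.
by rewrite !big_cons fcoD IH.
Qed.

Lemma iso_of_basis (X : 5.-tuple V) : (fullv <= <<X>>)%VS -> free X ->
  iso_to mul (fun i j => fco X (mul X`_i X`_j)).
Proof.
move=> hsp hfr.
exists (fco X); split.
- by move=> a u v; rewrite fcoD.
- exists (fun r : 'rV[CC]_5 => \sum_(i < 5) r 0 i *: X`_i) => [v|r].
    by rewrite /fco [RHS](coord_span (subvP hsp v (memvf v))); apply: eq_bigr => i _; rewrite mxE.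
  by apply/rowP => j; rewrite mxE coord_sum_free.
- move=> x y.
  rewrite {1}(coord_span (subvP hsp x (memvf x))) {1}(coord_span (subvP hsp y (memvf y))).
  rewrite mul_sumZl fco_sumZ /mulsc; apply: eq_bigr => i _.
  rewrite mul_sumZr fco_sumZ scaler_sumr; apply: eq_bigr => j _.
  by rewrite !mxE scalerA.
Qed.

Lemma Lv_transfer c (f : V -> 'rV[CC]_5) :
  linear f -> (forall x y, f (mul x y) = mulsc c (f x) (f y)) ->
  forall x y z, f (Lv x y z) = mulsc c (mulsc c (f x) (f y)) (f z)
     - mulsc c (mulsc c (f x) (f z)) (f y) - mulsc c (f x) (mulsc c (f y) (f z)).
Proof.
move=> hl hm x y z.
have fB : forall u v, f (u - v) = f u - f v.
  move=> u v; have f0 : f 0 = 0.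
    by have := hl 1 0 0; rewrite !scale1r !addr0 => H; apply: (@addrI _ (f 0)); rewrite addr0 -H.
  have fN : forall w, f (- w) = - f w.
    move=> w; apply/eqP; rewrite -addr_eq0.
    by have := hl 1 (- w) w; rewrite !scale1r addNr f0 => <-.
  by have := hl 1 u (- v); rewrite !scale1r fN.
by rewrite /Lv !fB !hm.
Qed.

Lemma alt_Tform cc dd pp qq : iso_to mul (Tform cc dd pp qq) -> binary_leibniz mul ->
  (forall x z, E_T cc pp qq x x z = 0) /\ (forall x z, E_T cc pp qq x z z = 0).
Proof.
move=> [f [hl [g fK gK] hm]] HB.
have key : forall r s t, E_T cc pp qq r s t *: E 4 = f (Lv (g r) (g s) (g t)).
  by move=> r s t; rewrite (Lv_transfer hl hm) !gK Ls_formula.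
have f0 : f 0 = 0.
  by have := hl 1 0 0; rewrite !scale1r !addr0 => H; apply: (@addrI _ (f 0)); rewrite addr0 -H.
have E4 : forall a : CC, a *: E 4 = 0 -> a = 0.
  by move=> a /rowP /(_ o4); rewrite !mxE /= mulr1.
split => x z; apply: E4; rewrite key.
- by rewrite (Lv0 HB (@gen2_a (g x) (g z)) (@gen2_a (g x) (g z)) (@gen2_b (g x) (g z))) f0.
- by rewrite (Lv0 HB (@gen2_a (g x) (g z)) (@gen2_b (g x) (g z)) (@gen2_b (g x) (g z))) f0.
Qed.

Lemma leib_Tform cc dd pp qq : iso_to mul (Tform cc dd pp qq) ->
  (forall x y z, E_T cc pp qq x y z = 0) -> is_leibniz mul.
Proof.
move=> [f [hl [g fK gK] hm]] H; apply: leib_of_Lv => x y z.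
have f0 : f 0 = 0.
  by have := hl 1 0 0; rewrite !scale1r !addr0 => H'; apply: (@addrI _ (f 0)); rewrite addr0 -H'.
apply: (can_inj fK); rewrite f0 (Lv_transfer hl hm) Ls_formula H scale0r //.
Qed.


Inductive deep (k : nat) : V -> Prop :=
| deep0 : deep k 0
| deepS a p m x : (k <= m)%N -> prod_n mul m p -> deep k x -> deep k (a *: p + x).

Lemma deepD k x y : deep k x -> deep k y -> deep k (x + y).
Proof.
elim=> [|a p m x' hm hp hx IH] hy; first by rewrite add0r.
by rewrite -addrA; apply: deepS hm hp (IH hy).
Qed.
Lemma deepZ k c x : deep k x -> deep k (c *: x).
Proof.
elim=> [|a p m x' hm hp hx IH]; first by rewrite scaler0; apply: deep0.
by rewrite scalerDr scalerA; apply: deepS hm hp IH.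
Qed.
Lemma deep_mulr k x y : deep k y -> deep k.+1 (mul x y).
Proof.
elim=> [|a p m y' hm hp hy IH]; first by rewrite mulr0V; apply: deep0.
rewrite mulDZr; apply: (@deepS _ a (mul x p) (1 + m)%N (mul x y')) => //.
exact: prod_node (prod_leaf _ x) hp.
Qed.
Lemma deep_mull k x y : deep k y -> deep k.+1 (mul y x).
Proof.
elim=> [|a p m y' hm hp hy IH]; first by rewrite mul0rV; apply: deep0.
rewrite mulDZl; apply: (@deepS _ a (mul p x) (m + 1)%N (mul y' x)) => //; first by rewrite addn1.
exact: prod_node hp (prod_leaf _ x).
Qed.
Lemma deep_span k (s : seq V) : (forall v, v \in s -> deep k v) ->
  forall x, x \in <<s>>%VS -> deep k x.
Proof.
elim: s => [|v s IH] hs x; first by rewrite span_nil memv0 => /eqP ->; apply: deep0.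
rewrite span_cons => /memv_addP [u hu [w hw ->]].
case/vlineP: hu => c ->; apply: deepD; first by apply: deepZ; apply: hs; rewrite inE eqxx.
by apply: IH => // v' hv'; apply: hs; rewrite inE hv' orbT.
Qed.
Lemma prod_pos m x : prod_n mul m x -> (0 < m)%N.
Proof. by elim=> // i j y z _ hi _ hj; rewrite addn_gt0 hi. Qed.
Lemma prod_cut m x : prod_n mul m x -> forall n, (0 < n <= m)%N -> prod_n mul n x.
Proof.
elim=> [y|i j y z hy IHy hz IHz] n /andP [n0 nm].
  have -> : n = 1%N by lia.
  exact: prod_leaf.
have [->|n1] := eqVneq n 1%N; first exact: prod_leaf.
have i0 := prod_pos hy; have j0 := prod_pos hz.
case: (leqP (n.-1) i) => hi.
  have -> : n = (n.-1 + 1)%N by lia.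
  apply: prod_node; first by apply: IHy; apply/andP; split; lia.
  by apply: IHz; apply/andP; split; lia.
have -> : n = (i + (n - i))%N by lia.
apply: prod_node; first by apply: IHy; apply/andP; split; lia.
by apply: IHz; apply/andP; split; lia.
Qed.

Lemma deep_nil : nilpotent_alg mul -> exists N, forall x, deep N x -> x = 0.
Proof.
case=> n0 [n0p hn0]; exists n0 => x.
elim=> [//|a p m x' hm hp hx IH].
by rewrite IH addr0 (hn0 p (prod_cut hp _)) ?scaler0 // n0p hm.
Qed.

Definition prodsp (X Y : {vspace V}) : {vspace V} :=
  <<allpairs mul (vbasis X) (vbasis Y)>>%VS.

Lemma mem_prodsp (X Y : {vspace V}) x y : x \in X -> y \in Y -> mul x y \in prodsp X Y.
Proof.
move=> hx hy; rewrite (coord_vbasis hx) (coord_vbasis hy) mul_sumZl.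
apply: memv_suml => i _; apply: memvZ; rewrite mul_sumZr.
apply: memv_suml => j _; apply: memvZ; apply: memv_span.
by apply: allpairs_f; apply: mem_nth; rewrite size_tuple.
Qed.

Lemma prodsp_sub (X Y Z : {vspace V}) :
  (forall x y, x \in X -> y \in Y -> mul x y \in Z) -> (prodsp X Y <= Z)%VS.
Proof.
move=> h; apply/span_subvP => v /allpairsP [[x y] /= [hx hy ->]].
by apply: h; apply: vbasis_mem.
Qed.

Lemma deep_prodspr k (X Y : {vspace V}) : (forall y, y \in Y -> deep k y) ->
  forall v, v \in prodsp X Y -> deep k.+1 v.
Proof.
move=> h; apply: deep_span => v /allpairsP [[x y] /= [hx hy ->]].
by apply: deep_mulr; apply: h; apply: vbasis_mem.
Qed.
Lemma deep_prodspl k (X Y : {vspace V}) : (forall x, x \in X -> deep k x) ->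
  forall v, v \in prodsp X Y -> deep k.+1 v.
Proof.
move=> h; apply: deep_span => v /allpairsP [[x y] /= [hx hy ->]].
by apply: deep_mull; apply: h; apply: vbasis_mem.
Qed.

Lemma deep1 x : deep 0 x.
Proof. by rewrite -[x]addr0 -[x]scale1r; apply: (@deepS 0 1 x 1%N 0) => //; [exact: prod_leaf | exact: deep0]. Qed.

Lemma nil_lemma (X : {vspace V}) : nilpotent_alg mul ->
  (X <= prodsp fullv X + prodsp X fullv)%VS -> X = 0%VS.
Proof.
move=> hnil hX; have [N hN] := deep_nil hnil.
have H : forall k x, x \in X -> deep k x.
  elim=> [x _|k IH x hx]; first exact: deep1.
  have := subvP hX x hx; case/memv_addP => u hu [w hw ->].
  apply: deepD; first exact: (deep_prodspr IH hu).
  exact: (deep_prodspl IH hw).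
apply/eqP; rewrite -subv0; apply/subvP => x hx; rewrite memv0; apply/eqP.
by apply: hN; apply: H.
Qed.

Lemma all_gen a b : nilpotent_alg mul ->
  (fullv <= <<[:: a; b]>> + prodsp fullv fullv)%VS -> forall x, gen2 mul a b x.
Proof.
move=> hnil hfull x U ha hb hU.
have [N hN] := deep_nil hnil.
have hab : (<<[:: a; b]>> <= U)%VS.
  by apply/span_subvP => v; rewrite !inE => /orP [] /eqP ->.
suff H : forall k y, exists2 u, u \in U & deep k (y - u).
  by case: (H N x) => u hu /hN /eqP; rewrite subr_eq0 => /eqP ->.
elim=> [y|k IH y]; first by exists 0; [exact: mem0v | exact: deep1].
have := subvP hfull y (memvf y); case/memv_addP => s hs [w hw ->].
have hspan : forall t : seq V, (forall e, e \in t -> exists2 u, u \in U & deep k.+1 (e - u)) ->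
    forall w, w \in <<t>>%VS -> exists2 u, u \in U & deep k.+1 (w - u).
  elim=> [|e t IHt] ht w'; first by rewrite span_nil memv0 => /eqP ->; exists 0; rewrite ?mem0v ?subr0 //; exact: deep0.
  rewrite span_cons => /memv_addP [u1 hu1 [w1 hw1 ->]].
  case/vlineP: hu1 => c ->.
  have [ue hue de] := ht e (mem_head e t).
  have [u2 hu2 d2] := IHt (fun e' he' => ht e' (introT orP (or_intror he'))) w1 hw1.
  exists (c *: ue + u2); first by rewrite memvD // memvZ.
  have -> : c *: e + w1 - (c *: ue + u2) = c *: (e - ue) + (w1 - u2).
    by rewrite scalerBr opprD !addrA [_ - c *: ue + w1]addrAC.
  by apply: deepD => //; apply: deepZ.
have [u hu hd] : exists2 u, u \in U & deep k.+1 (w - u).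
  apply: (hspan _ _ w hw) => e /allpairsP [[y1 z1] /= [_ _ ->]].
  have [u1 hu1 d1] := IH y1; have [u2 hu2 d2] := IH z1.
  exists (mul u1 u2); first exact: hU.
  have -> : mul y1 z1 - mul u1 u2 = mul y1 (z1 - u2) + mul (y1 - u1) u2.
    by rewrite mulBrV mulBlV addrA subrK.
  by apply: deepD; [apply: deep_mulr | apply: deep_mull].
exists (s + u); first by rewrite memvD // (subvP hab).
by rewrite opprD addrACA subrr add0r.
Qed.


Lemma leib_of_gen : binary_leibniz mul -> forall a b, (forall x, gen2 mul a b x) -> is_leibniz mul.
Proof. by move=> HB a b hg x y z _ _ _; apply: (HB a b); apply: hg. Qed.

Lemma stepA : \dim (fullv : {vspace V}) = 5%N -> nilpotent_alg mul -> binary_leibniz mul ->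
  ~ is_leibniz mul -> exists cc dd pp qq, iso_to mul (Tform cc dd pp qq).
Proof.
move=> Hdim Hnil HB NL.
pose V2 := prodsp fullv fullv.
pose V3 := (prodsp fullv V2 + prodsp V2 fullv)%VS.
have hV2 : forall x y, mul x y \in V2 by move=> x y; apply: mem_prodsp; apply: memvf.
have hV3l : forall x v, v \in V2 -> mul x v \in V3.
  by move=> x v hv; apply: (subvP (addvSl _ _)); apply: mem_prodsp => //; apply: memvf.
have hV3r : forall x v, v \in V2 -> mul v x \in V3.
  by move=> x v hv; apply: (subvP (addvSr _ _)); apply: mem_prodsp => //; apply: memvf.
have V32 : (V3 <= V2)%VS by rewrite subv_add; apply/andP; split; apply: prodsp_sub => x y _ _; apply: hV2.
have hL : forall x y z, Lv x y z \in V3.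
  by move=> x y z; rewrite /Lv; apply: memvB; [apply: memvB|]; [apply: hV3r | apply: hV3r | apply: hV3l]; apply: hV2.
have d2 : (\dim V2 <= 2)%N.
  rewrite leqNgt; apply/negP => d2.
  pose W := (V2^C)%VS.
  have dW : (\dim W <= 2)%N by rewrite /W dimv_compl Hdim; lia.
  pose a := (vbasis W)`_0; pose b := (vbasis W)`_1.
  have hW : (W <= <<[:: a; b]>>)%VS.
    rewrite -{1}(span_basis (vbasisP W)); apply/span_subvP => v hv.
    have hi : (index v (vbasis W) < 2)%N.
      by apply: (leq_trans _ dW); rewrite -{2}(size_tuple (vbasis W)) index_mem.
    rewrite -(nth_index 0 hv); move: hi; case: (index v _) => [|[|//]] _;
      apply: memv_span; rewrite !inE eqxx ?orbT //.
  apply: NL; apply: (leib_of_gen HB (a := a) (b := b)); apply: all_gen => //.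
  apply: (subv_trans _ (addvS hW (subvv V2))).
  by rewrite -(addv_complf V2) addvC.
have n3 : V3 != 0%VS.
  apply/negP => /eqP h3; apply: NL; apply: leib_of_Lv => x y z.
  by apply/eqP; rewrite -memv0 -h3.
have n23 : ~~ (V2 <= V3)%VS.
  apply/negP => h23; have V20 := nil_lemma Hnil h23.
  move: V32; rewrite V20 subv0 => h; by rewrite h in n3.
have d3 : \dim V3 = 1%N.
  have := dimv_leqif_eq V32; case=> hle heq.
  have hne : \dim V3 != \dim V2 by rewrite heq; apply: contra n23 => /eqP ->; apply: subvv.
  have : (0 < \dim V3)%N by rewrite lt0n dimv_eq0.
  lia.
have dd2 : \dim V2 = 2%N.
  have := dimv_leqif_eq V32; case=> hle heq.
  have hne : \dim V3 != \dim V2 by rewrite heq; apply: contra n23 => /eqP ->; apply: subvv.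
  lia.
pose V4 := (prodsp fullv V3 + prodsp V3 fullv)%VS.
have V43 : (V4 <= V3)%VS.
  rewrite subv_add; apply/andP; split; apply: prodsp_sub => x y hx hy.
  - by apply: hV3l; apply: (subvP V32).
  - by apply: hV3r; apply: (subvP V32).
have V40 : V4 = 0%VS.
  apply/eqP; rewrite -dimv_eq0.
  have := dimv_leqif_eq V43; case=> hle heq.
  have hne : \dim V4 != \dim V3.
    rewrite heq; apply/negP => /eqP e43; move: n3.
    by rewrite (nil_lemma Hnil (X := V3)) ?eqxx // -{1}e43 subvv.
  lia.
have ann_r : forall x w, w \in V3 -> mul x w = 0.
  move=> x w hw; apply/eqP; rewrite -memv0 -V40; apply: (subvP (addvSl _ _)).
  by apply: mem_prodsp => //; apply: memvf.
have ann_l : forall x w, w \in V3 -> mul w x = 0.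
  move=> x w hw; apply/eqP; rewrite -memv0 -V40; apply: (subvP (addvSr _ _)).
  by apply: mem_prodsp => //; apply: memvf.
have [x1 [x2 he3]] : exists x1 x2, mul x1 x2 \notin V3.
  have : ~~ all (fun e => e \in V3) (allpairs mul (vbasis fullv) (vbasis fullv)).
    apply: contra n23 => /allP h; apply/span_subvP => v hv; exact: h.
  case/allPn => e /allpairsP [[y z] /= [_ _ ->]] hn; by exists y, z.
pose e3 := mul x1 x2.
have e3V2 : e3 \in V2 by apply: hV2.
have e3e3 : mul e3 e3 = 0.
  have := Lv0 HB (@gen2_a x1 x2) (@gen2_b x1 x2) (gen2_mul (@gen2_a x1 x2) (@gen2_b x1 x2)).
  by rewrite /Lv -/e3 (@ann_l x2 _ (hV3l x1 _ e3V2)) (@ann_r x1 _ (hV3l x2 _ e3V2)) !subr0.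
pose e5 := vpick V3.
have e5V3 : e5 \in V3 by apply: memv_pick.
have e5n : e5 != 0 by rewrite vpick0.
have V3e : V3 = <[e5]>%VS.
  apply/eqP; rewrite eq_sym eqEdim d3 dim_vline e5n andbT; exact: e5V3.
have V2e : V2 = (<[e3]> + <[e5]>)%VS.
  apply/eqP; rewrite eq_sym eqEdim dd2.
  have sub : (<[e3]> + <[e5]> <= V2)%VS.
    by rewrite subv_add -!memvE e3V2 (subvP V32).
  rewrite sub /=.
  have := dimv_leqif_eq (addvSr <[e3]> <[e5]>); case=> hle heq.
  have hne : \dim <[e5]> != \dim (<[e3]> + <[e5]>).
    have he3' : e3 \in (<[e3]> + <[e5]>)%VS.
      by rewrite -[X in X \in _]addr0; apply: memv_add; [apply: memv_line | apply: mem0v].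
    rewrite heq; apply/negP => /eqP e35; move: he3; rewrite V3e e35.
    by rewrite -/e3 he3'.
  move: hle hne; rewrite dim_vline e5n; lia.
pose W := (V2^C)%VS.
have dW : \dim W = 3%N by rewrite /W dimv_compl Hdim dd2.
pose y0 := (vbasis W)`_0; pose y1 := (vbasis W)`_1; pose y2 := (vbasis W)`_2.
pose X := [tuple y0; y1; e3; y2; e5].
have hsp : (fullv <= <<X>>)%VS.
  rewrite -(addv_complf V2) subv_add; apply/andP; split.
    rewrite V2e subv_add; apply/andP; split; rewrite -memvE; apply: memv_span; rewrite !inE eqxx ?orbT //.
  rewrite -/W -{1}(span_basis (vbasisP W)); apply/span_subvP => v hv.
  have hi : (index v (vbasis W) < 3)%N.
    by rewrite -dW -{2}(size_tuple (vbasis W)) index_mem.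
  rewrite -(nth_index 0 hv); move: hi; case: (index v _) => [|[|[|//]]] _;
    apply: memv_span; rewrite !inE eqxx ?orbT //.
have hfr : free X.
  have hX : <<X>>%VS = fullv by apply/eqP; rewrite eqEsubv subvf hsp.
  by rewrite /free hX Hdim size_tuple.
have iso := iso_of_basis hsp hfr.
pose c := fun i j => fco X (mul X`_i X`_j).
have fe3 : fco X e3 = E 2.
  apply/rowP => j; rewrite !mxE.
  have -> : e3 = X`_o2 by [].
  by rewrite coord_free //; case: j => [[|[|[|[|[|?]]]]] ?].
have fe5 : fco X e5 = E 4.
  apply/rowP => j; rewrite !mxE.
  have -> : e5 = X`_o4 by [].
  by rewrite coord_free //; case: j => [[|[|[|[|[|?]]]]] ?].
have fV2 : forall v, v \in V2 -> fco X v = fco X v 0 o2 *: E 2 + fco X v 0 o4 *: E 4.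
  move=> v; rewrite V2e => /memv_addP [u hu [w hw ->]].
  case/vlineP: hu => al ->; case/vlineP: hw => be ->.
  have -> : fco X (al *: e3 + be *: e5) = al *: E 2 + be *: E 4.
    by rewrite fcoD -[be *: e5]addr0 fcoD fco0 addr0 fe3 fe5.
  by rewrite E24_2 E24_4.
have fV3 : forall v, v \in V3 -> fco X v = fco X v 0 o4 *: E 4.
  move=> v; rewrite V3e => /vlineP [be ->].
  have -> : fco X (be *: e5) = be *: E 4 by rewrite -[be *: e5]addr0 fcoD fco0 addr0 fe5.
  by rewrite E4_4.
exists (fun i j => c i j 0 o2), (fun i j => c i j 0 o4), (fun i => c i o2 0 o4), (fun j => c o2 j 0 o4).
apply: (iso_ext _ iso); apply: Tform_of.
- by move=> i j; apply: fV2.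
- by move=> i; apply: fV3; apply: hV3l.
- by move=> j; apply: fV3; apply: hV3r.
- by rewrite /c /= e3e3 fco0.
- by move=> i; rewrite /c /= ann_r // fco0.
- by move=> i; rewrite /c /= ann_l // fco0.
Qed.

End VLevel.

Lemma e_E k : (k < 5)%N -> e k.+1 = E k.
Proof. by move=> hk; apply/rowP => j; rewrite e_row // !mxE. Qed.

Ltac tabeq := apply: forall5; apply: forall5;
  rewrite /Nform /Tform /isgen /ncc /ndd /npp /nqq /sc /= ?big_cons ?big_nil /=
   ?(e_E (isT : (2 < 5)%N)) ?(e_E (isT : (4 < 5)%N))
   ?scale1r ?scale0r ?addr0 ?add0r ?scaleN1r //.

Lemma B01E : forall i j, Nform 0 0 0 0 0 0 i j = B01 i j.
Proof. rewrite /B01; tabeq. Qed.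
Lemma B02E : forall i j, Nform 0 0 0 0 0 1 i j = B02 i j.
Proof. rewrite /B02; tabeq. Qed.
Lemma B03E : forall i j, Nform 0 0 0 1 0 0 i j = B03 i j.
Proof. rewrite /B03; tabeq. Qed.
Lemma B04E : forall i j, Nform 0 0 0 1 0 1 i j = B04 i j.
Proof. rewrite /B04; tabeq. Qed.
Lemma B05E : forall i j, Nform 0 1 0 0 0 0 i j = B05 i j.
Proof. rewrite /B05; tabeq. Qed.
Lemma B06E : forall i j, Nform 0 1 0 1 0 0 i j = B06 i j.
Proof. rewrite /B06; tabeq. Qed.
Lemma B07E : forall i j, Nform 0 1 0 0 0 1 i j = B07 i j.
Proof. rewrite /B07; tabeq. Qed.
Lemma B08E : forall i j, Nform 0 1 0 1 0 1 i j = B08 i j.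
Proof. rewrite /B08; tabeq. Qed.
Lemma B09E al : forall i j, Nform 0 1 0 1 1 al i j = B09 al i j.
Proof. rewrite /B09; tabeq. Qed.
Lemma B10E : forall i j, Nform 1 0 0 0 0 0 i j = B10 i j.
Proof. rewrite /B10; tabeq. Qed.
Lemma B11E : forall i j, Nform 1 0 0 0 0 1 i j = B11 i j.
Proof. rewrite /B11; tabeq. Qed.
Lemma B12E al : forall i j, Nform 1 0 0 1 0 al i j = B12 al i j.
Proof. rewrite /B12; tabeq. Qed.
Lemma B13E : forall i j, Nform 1 0 0 0 1 0 i j = B13 i j.
Proof. rewrite /B13; tabeq. Qed.
Lemma B14E : forall i j, Nform 1 0 0 0 1 1 i j = B14 i j.
Proof. rewrite /B14; tabeq. Qed.




Unset Implicit Arguments.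

Theorem theoremA (V : vectType CC) (mul : V -> V -> V) :
  bilinear_prod mul ->
  \dim (fullv : {vspace V}) = 5%N ->
  nilpotent_alg mul ->
  binary_leibniz mul ->
  is_leibniz mul
  \/ iso_to mul B01 \/ iso_to mul B02 \/ iso_to mul B03 \/ iso_to mul B04
  \/ iso_to mul B05 \/ iso_to mul B06 \/ iso_to mul B07 \/ iso_to mul B08
  \/ (exists alpha : CC, iso_to mul (B09 alpha))
  \/ iso_to mul B10 \/ iso_to mul B11
  \/ (exists alpha : CC, iso_to mul (B12 alpha))
  \/ iso_to mul B13 \/ iso_to mul B14.
Proof.
move=> Hbil Hdim Hnil HB.
case: (classic (is_leibniz mul)) => [L|NL]; first by left.
right.
have [cc [dd [pp [qq iso]]]] := stepA Hbil Hdim Hnil HB NL.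
have [h1 h3] := alt_Tform iso HB.
case: (stepB dd h1 h3) => [H|[m11 [m12 [m22 [v1 [v2 [s T]]]]]]].
  by exfalso; apply: NL; apply: (leib_Tform iso H).
have isoN := iso_change iso T.
have IsoT : forall c c', iso_to mul c -> tiso c c' -> iso_to mul c'.
  by move=> c c' h t; apply: (iso_change h t).
have ext := @iso_ext _ mul.
case: (stepC IsoT isoN) => [H|[H|[H|[H|[H|[H|[H|[H|[[al H]|[H|[H|[[al H]|[H|H]]]]]]]]]]]]].
- by left; apply: (ext _ _ B01E).
- by right; left; apply: (ext _ _ B02E).
- by do 2 right; left; apply: (ext _ _ B03E).
- by do 3 right; left; apply: (ext _ _ B04E).
- by do 4 right; left; apply: (ext _ _ B05E).
- by do 5 right; left; apply: (ext _ _ B06E).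
- by do 6 right; left; apply: (ext _ _ B07E).
- by do 7 right; left; apply: (ext _ _ B08E).
- by do 8 right; left; exists al; apply: (ext _ _ (B09E al)).
- by do 9 right; left; apply: (ext _ _ B10E).
- by do 10 right; left; apply: (ext _ _ B11E).
- by do 11 right; left; exists al; apply: (ext _ _ (B12E al)).
- by do 12 right; left; apply: (ext _ _ B13E).
- by do 13 right; apply: (ext _ _ B14E).
Qed.
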